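(* Let $g\colon X_m\to X_m$ be an odometer with metric $d(x,y)=\sup_{k\ge1}2^{-k}\delta(x_k,y_k)$, where $\delta(a,b)=0$ if $a=b$ and $1$ otherwise. Let $X=\{p\}\sqcup X_m$ with $d$ extended to a metric on $X$ such that $d(p,x)>1$ for all $x\in X_m$. Let $q=(0,0,\dots)\in X_m$ and define $f\colon X\to X$ by $f(p)=q$ and $f(x)=g(x)$ for $x\in X_m$. Then $f$ is equicontinuous and has the shadowing property, but $f$ does not have the s-limit shadowing property.
   Context: Odometer: given a strictly increasing sequence $m=(m_k)_{k\ge1}$ of positive integers with $m_1\ge2$ and $m_k\mid m_{k+1}$, $X_m=\{(x_k)_{k\ge1}\in\prod_{k}\{0,\dots,m_k-1\}: x_k\equiv x_{k+1}\pmod{m_k}\ \forall k\}$ and $g(x)_k=x_k+1\pmod{m_k}$. $f$ is equicontinuous if for every $\epsilon>0$ there is $\delta>0$ with $d(x,y)\le\delta\Rightarrow\sup_{n\ge0}d(f^n(x),f^n(y))\le\epsilon$. A $\delta$-pseudo orbit is $(x_i)_{i\ge0}$ with $d(f(x_i),x_{i+1})\le\delta$ for all $i$; it is $\epsilon$-shadowed by $x$ if $d(x_i,f^i(x))\le\epsilon$ for all $i$; a limit pseudo orbit satisfies $\lim_i d(f(x_i),x_{i+1})=0$, and $y$ is a limit shadowing point of it if $\lim_i d(x_i,f^i(y))=0$. Shadowing property: for every $\epsilon>0$ there is $\delta>0$ such that every $\delta$-pseudo orbit is $\epsilon$-shadowed by some point. s-limit shadowing property: for every $\epsilon>0$ there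 is $\delta>0$ such that (1) every $\delta$-pseudo orbit is $\epsilon$-shadowed by some point, and (2) every $\delta$-pseudo orbit that is also a limit pseudo orbit is $\epsilon$-shadowed by some point that is also a limit shadowing point of it. *)

(* Defs.v *)
From Stdlib Require Import Reals Lra Lia Arith.
Open Scope R_scope.

(* The paper's sequence (m_k)_{k>=1} is represented 0-indexed: [m i] is m_{i+1}. *)
Record odoseq := {
  m :> nat -> nat;
  m_ge2 : (2 <= m 0)%nat;
  m_inc : forall k, (m k < m (S k))%nat;
  m_div : forall k, Nat.divide (m k) (m (S k))
}.

Lemma odo_pos (M : odoseq) k : (m M k <> 0)%nat.
Proof.
  assert (H : forall k, (2 <= m M k)%nat).
  { induction k0. apply m_ge2. pose proof (m_inc M k0). lia. }
  specialize (H k). lia.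
Qed.

(* X_m : 0-indexed sequences, [x i] is x_{i+1}. *)
Definition Xm (M : odoseq) : Type :=
  { x : nat -> nat | forall k, (x k < M k)%nat /\ x k = (x (S k) mod M k)%nat }.

Lemma mod_mod_dvd a b c : c <> 0%nat -> Nat.divide c b -> ((a mod b) mod c = a mod c)%nat.
Proof.
  intros Hc [t Ht]. subst b.
  destruct (Nat.eq_dec t 0) as [->|Ht0].
  - simpl. reflexivity.
  - rewrite (Nat.div_mod_eq a (t * c)) at 2.
    rewrite Nat.add_comm.
    replace (t * c * (a / (t * c)))%nat with ((t * (a / (t * c))) * c)%nat by lia.
    rewrite Nat.Div0.mod_add. reflexivity.
Qed.

Lemma odo_g_ok (M : odoseq) (x : Xm M) :
  forall k, (((proj1_sig x k + 1) mod M k) < M k)%nat /\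
    ((proj1_sig x k + 1) mod M k = ((proj1_sig x (S k) + 1) mod M (S k)) mod M k)%nat.
Proof.
  intro k. destruct x as [x Hx]; simpl. split.
  - apply Nat.mod_upper_bound, odo_pos.
  - rewrite mod_mod_dvd by (apply odo_pos || apply m_div).
    destruct (Hx k) as [_ ->].
    apply Nat.Div0.add_mod_idemp_l.
Qed.

Definition odo_g (M : odoseq) (x : Xm M) : Xm M :=
  exist _ (fun k => ((proj1_sig x k + 1) mod M k)%nat) (odo_g_ok M x).

Lemma odo_zero_ok (M : odoseq) :
  forall k, ((fun _ : nat => 0%nat) k < M k)%nat /\ (fun _ : nat => 0%nat) k = (0 mod M k)%nat.
Proof. intro k. pose proof (odo_pos M k). split. simpl; lia. simpl. rewrite Nat.Div0.mod_0_l. reflexivity. Qed.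

Definition odo_q (M : odoseq) : Xm M := exist _ (fun _ => 0%nat) (odo_zero_ok M).

Definition discr (a b : nat) : R := if Nat.eq_dec a b then 0 else 1.

(* The set {2^{-k} delta(x_k, y_k) : k >= 1}, 0-indexed: weight (1/2)^(i+1) at index i. *)
Definition odo_dist_set (M : odoseq) (x y : Xm M) : R -> Prop :=
  fun r => exists i : nat, r = (/2) ^ (S i) * discr (proj1_sig x i) (proj1_sig y i).

(* X = {p} ⊔ X_m, with p = None. f(p) = q, f(x) = g(x). *)
Definition ext_f (M : odoseq) (z : option (Xm M)) : option (Xm M) :=
  match z with
  | None => Some (odo_q M)
  | Some x => Some (odo_g M x)
  end.

Definition is_metric {T : Type} (d : T -> T -> R) : Prop :=
  (forall a b, d a b = 0 <-> a = b) /\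
  (forall a b, d a b = d b a) /\
  (forall a b c, d a c <= d a b + d b c).

Definition equicontinuous {T : Type} (d : T -> T -> R) (f : T -> T) : Prop :=
  forall eps, eps > 0 -> exists delta, delta > 0 /\
    forall x y, d x y <= delta -> forall n : nat, d (Nat.iter n f x) (Nat.iter n f y) <= eps.

Definition pseudo_orbit {T : Type} (d : T -> T -> R) (f : T -> T) (delta : R) (xs : nat -> T) : Prop :=
  forall i, d (f (xs i)) (xs (S i)) <= delta.

Definition shadows {T : Type} (d : T -> T -> R) (f : T -> T) (eps : R) (xs : nat -> T) (x : T) : Prop :=
  forall i, d (xs i) (Nat.iter i f x) <= eps.

Definition limit_pseudo_orbit {T : Type} (d : T -> T -> R) (f : T -> T) (xs : nat -> T) : Prop :=
  Un_cv (fun i => d (f (xs i)) (xs (S i))) 0.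

Definition limit_shadowing_point {T : Type} (d : T -> T -> R) (f : T -> T) (xs : nat -> T) (y : T) : Prop :=
  Un_cv (fun i => d (xs i) (Nat.iter i f y)) 0.

Definition shadowing_property {T : Type} (d : T -> T -> R) (f : T -> T) : Prop :=
  forall eps, eps > 0 -> exists delta, delta > 0 /\
    forall xs, pseudo_orbit d f delta xs -> exists x, shadows d f eps xs x.

Definition s_limit_shadowing_property {T : Type} (d : T -> T -> R) (f : T -> T) : Prop :=
  forall eps, eps > 0 -> exists delta, delta > 0 /\
    (forall xs, pseudo_orbit d f delta xs -> exists x, shadows d f eps xs x) /\
    (forall xs, pseudo_orbit d f delta xs -> limit_pseudo_orbit d f xs ->
       exists x, shadows d f eps xs x /\ limit_shadowing_point d f xs x).

(* Main.v *)
Require Import Defs.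
From Stdlib Require Import Reals.
From Stdlib Require Import Lra Lia Arith.
Open Scope R_scope.

Lemma half_pow_pos n : 0 < (/2) ^ n.
Proof. apply pow_lt; lra. Qed.

Lemma half_pow_le1 n : (/2) ^ n <= 1.
Proof. induction n; simpl. lra. pose proof (half_pow_pos n). nra. Qed.

Lemma half_pow_lt a b : (a < b)%nat -> (/2) ^ b < (/2) ^ a.
Proof.
  intro H. replace b with (a + S (b - S a))%nat by lia.
  rewrite pow_add. pose proof (half_pow_pos a). simpl.
  pose proof (half_pow_le1 (b - S a)). nra.
Qed.

Lemma half_pow_le a b : (a <= b)%nat -> (/2) ^ b <= (/2) ^ a.
Proof.
  intro H. destruct (Nat.eq_dec a b). subst; lra. left; apply half_pow_lt; lia.
Qed.

Definition agree (M : odoseq) N (x y : Xm M) := forall k, (k < N)%nat -> proj1_sig x k = proj1_sig y k.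

Section S.
Variable M : odoseq.
Variable D : option (Xm M) -> option (Xm M) -> R.
Hypothesis Hlub : forall x y : Xm M, is_lub (odo_dist_set M x y) (D (Some x) (Some y)).

Lemma diff_ge x y k : proj1_sig x k <> proj1_sig y k -> (/2) ^ (S k) <= D (Some x) (Some y).
Proof.
  intro H. destruct (Hlub x y) as [Hub _]. apply Hub. exists k.
  unfold discr. destruct (Nat.eq_dec _ _). contradiction. ring.
Qed.

Lemma close_agree N x y : D (Some x) (Some y) <= (/2) ^ (S N) -> agree M N x y.
Proof.
  intros H k Hk. destruct (Nat.eq_dec (proj1_sig x k) (proj1_sig y k)) as [e|n]; auto.
  pose proof (diff_ge x y k n). pose proof (half_pow_lt (S k) (S N)). exfalso.
  assert ((S k < S N)%nat) by lia. specialize (H1 H2). eapply Rlt_irrefl; eapply Rle_lt_trans; [eapply Rle_trans; [apply H0|apply H]|apply H1].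
Qed.

Lemma agree_le N x y : agree M N x y -> D (Some x) (Some y) <= (/2) ^ (S N).
Proof.
  intro H. destruct (Hlub x y) as [_ Hl]. apply Hl. intros r [i ->].
  unfold discr. destruct (Nat.eq_dec _ _).
  - rewrite Rmult_0_r. left; apply half_pow_pos.
  - rewrite Rmult_1_r. apply half_pow_le.
    destruct (Nat.lt_ge_cases i N) as [Hi|Hi]. exfalso; apply n; apply H; auto. lia.
Qed.
End S.

Lemma iter_g (M : odoseq) n (x : Xm M) k :
  proj1_sig (Nat.iter n (odo_g M) x) k = ((proj1_sig x k + n) mod M k)%nat.
Proof.
  induction n; simpl.
  - rewrite Nat.add_0_r. rewrite Nat.mod_small; auto. destruct x as [x Hx]; apply Hx.
  - rewrite IHn. rewrite Nat.Div0.add_mod_idemp_l. f_equal. lia.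
Qed.

Lemma agree_g M N x y : agree M N x y -> agree M N (odo_g M x) (odo_g M y).
Proof. intros H k Hk. simpl. rewrite H; auto. Qed.

Lemma agree_trans M N x y z : agree M N x y -> agree M N y z -> agree M N x z.
Proof. intros H1 H2 k Hk. rewrite H1, H2; auto. Qed.

Lemma agree_iter M N n x y : agree M N x y -> agree M N (Nat.iter n (odo_g M) x) (Nat.iter n (odo_g M) y).
Proof. induction n; simpl; auto. intro; apply agree_g; auto. Qed.

Lemma iter_f_Some M n x : Nat.iter n (ext_f M) (Some x) = Some (Nat.iter n (odo_g M) x).
Proof. induction n; simpl; auto. rewrite IHn. reflexivity. Qed.

Lemma M_div_le (M : odoseq) k n : (k <= n)%nat -> Nat.divide (M k) (M n).
Proof.
  induction 1. apply Nat.divide_refl. eapply Nat.divide_trans. apply IHle. apply m_div.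
Qed.

Lemma small_N eps : eps > 0 -> exists N, (/2) ^ (S N) <= eps.
Proof.
  intro H. destruct (pow_lt_1_zero (/2)) with eps as [N HN]; auto.
  rewrite Rabs_pos_eq; lra.
  exists N. specialize (HN (S N) ltac:(lia)). rewrite Rabs_pos_eq in HN. lra.
  left; apply half_pow_pos.
Qed.

Lemma mod_neq a j m : (0 < a < m)%nat -> ((a + j) mod m <> j mod m)%nat.
Proof.
  intros Ha E. rewrite Nat.Div0.add_mod in E.
  pose proof (Nat.mod_upper_bound j m ltac:(lia)).
  set (r := (j mod m)%nat) in *. rewrite (Nat.mod_small a m) in E by lia.
  pose proof (Nat.div_mod (a + r) m ltac:(lia)). rewrite E in H0.
  set (qv := ((a + r) / m)%nat) in *. clearbody qv r.
  destruct qv as [|qv]; nia.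
Qed.

Theorem mainTheorem14 (M : odoseq) (D : option (Xm M) -> option (Xm M) -> R) :
  is_metric D ->
  (forall x y : Xm M, is_lub (odo_dist_set M x y) (D (Some x) (Some y))) ->
  (forall x : Xm M, D None (Some x) > 1) ->
  equicontinuous D (ext_f M) /\ shadowing_property D (ext_f M) /\
  ~ s_limit_shadowing_property D (ext_f M).
Proof.
  intros [Hid [Hsym _]] Hlub Hp.
  assert (Hrefl : forall a, D a a = 0) by (intro; apply Hid; auto).
  assert (Hp' : forall x, D (Some x) None > 1) by (intro; rewrite Hsym; auto).
  split; [|split].
  - intros eps Heps. destruct (small_N eps Heps) as [N HN].
    exists ((/2) ^ (S N)). split. apply half_pow_pos.
    pose proof (half_pow_le1 (S N)).
    intros [x|] [y|] Hxy n; set (t := (/2) ^ (S N)) in *.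
    + rewrite !iter_f_Some. eapply Rle_trans; [|apply HN].
      apply (agree_le M D Hlub). apply agree_iter. apply (close_agree M D Hlub); auto.
    + specialize (Hp' x); lra.
    + specialize (Hp y); lra.
    + rewrite Hrefl; lra.
  - intros eps Heps. destruct (small_N eps Heps) as [N HN].
    exists ((/2) ^ (S N)). split. apply half_pow_pos.
    pose proof (half_pow_le1 (S N)).
    set (t := (/2) ^ (S N)) in *.
    intros xs Hps.
    assert (Hw : exists w, ext_f M (xs 0%nat) = Some w)
      by (destruct (xs 0%nat); simpl; eauto).
    destruct Hw as [w Hw].
    assert (Hc : forall i, exists y, xs (S i) = Some y /\ agree M N y (Nat.iter i (odo_g M) w)).
    { induction i.
      - specialize (Hps 0%nat). rewrite Hw in Hps. destruct (xs 1%nat) as [y|] eqn:E.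
        + exists y. split; auto. intros k Hk. symmetry. apply (close_agree M D Hlub N w y); auto.
        + specialize (Hp' w). lra.
      - destruct IHi as [y [E A]]. specialize (Hps (S i)). rewrite E in Hps. simpl in Hps.
        destruct (xs (S (S i))) as [y'|] eqn:E'.
        + exists y'. split; auto. simpl. eapply agree_trans; [|apply agree_g, A].
          intros k Hk. symmetry. apply (close_agree M D Hlub N _ _ Hps); auto.
        + specialize (Hp' (odo_g M y)). lra. }
    exists (xs 0%nat). intros [|i].
    + simpl. rewrite Hrefl. lra.
    + rewrite Nat.iter_succ_r, Hw, iter_f_Some. destruct (Hc i) as [y [E A]].
      rewrite E. eapply Rle_trans; [|apply HN]. apply (agree_le M D Hlub); auto.
  - intro H. destruct (H (/2) ltac:(lra)) as [delta [Hd [_ H2]]].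
    destruct (small_N delta Hd) as [N HN].
    set (y := Nat.iter (M N) (odo_g M) (odo_q M)).
    set (xs := fun i => match i with 0%nat => None | S j => Some (Nat.iter j (odo_g M) y) end).
    assert (Ag : agree M N (odo_q M) y).
    { intros k Hk. unfold y. rewrite iter_g. simpl. symmetry. apply Nat.Lcm0.mod_divide.
      apply M_div_le. lia. }
    destruct (H2 xs) as [x [Hsh Hlim]].
    + intros [|i].
      * simpl. eapply Rle_trans; [|apply HN]. apply (agree_le M D Hlub); auto.
      * simpl. rewrite Hrefl. lra.
    + intros e He. exists 1%nat. intros [|n] Hn. lia. simpl. rewrite Hrefl.
      unfold R_dist. rewrite Rminus_0_r, Rabs_R0. auto.
    + destruct x as [x|].
      * specialize (Hsh 0%nat). simpl in Hsh. specialize (Hp x). lra.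
      * destruct (Hlim ((/2) ^ (S (S N))) (half_pow_pos _)) as [n0 Hn0].
        specialize (Hn0 (S n0) ltac:(lia)). unfold R_dist in Hn0.
        rewrite Rminus_0_r in Hn0. simpl xs in Hn0.
        rewrite Nat.iter_succ_r in Hn0. simpl ext_f in Hn0. rewrite iter_f_Some in Hn0.
        assert (Hne : proj1_sig (Nat.iter n0 (odo_g M) y) (S N) <>
                      proj1_sig (Nat.iter n0 (odo_g M) (odo_q M)) (S N)).
        { unfold y. rewrite !iter_g. simpl. idtac.
          rewrite (Nat.mod_small (M N) (M (S N))) by apply m_inc.
          apply mod_neq. pose proof (odo_pos M N). pose proof (m_inc M N). lia. }
        pose proof (diff_ge M D Hlub _ _ _ Hne).
        pose proof (half_pow_pos (S (S N))).
        set (t := (/2) ^ (S (S N))) in *.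
        rewrite Rabs_pos_eq in Hn0. eapply Rlt_irrefl; eapply Rle_lt_trans; [apply H0|apply Hn0]. left; eapply Rlt_le_trans; [apply H1|apply H0].
Qed.
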